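(* In the setting below, let $n>2$ be an integer and let $(x_f,y_f,\theta_f)$ be any goal pose. The minimum travel time over all $2n\pi$-arc $LSL$ and $RSR$ paths reaching this goal pose is not smaller than the minimum travel time over all $4\pi$-arc $LSL$ and $RSR$ paths reaching it. In other words, extending the ranges of $\alpha$ and $\gamma$ beyond $[0,4\pi)$ does not reduce the minimum travel time.
   Context: Setting: a vehicle moves in the plane at unit speed with minimum turning radius $r>0$, in a steady current $(w_x,w_y)$ with speed $v_w=\sqrt{w_x^2+w_y^2}\in(0,1)$. The start pose is $(0,0,0)$ and the goal pose is $(x_f,y_f,\theta_f)$ with $\theta_f\in[0,2\pi)$. An $LSL$ path has parameters $(\alpha,\beta,\gamma)$ with $\alpha,\gamma\ge0$ and $\beta\ge0$: a left arc of angle $\alpha$ of radius $r$, a straight segment of length $\beta$, and a left arc of angle $\gamma$, in the frame moving with the current. Its travel time is $T=r(\alpha+\gamma)+\beta$. It reaches the goal iff for some $k\in\mathbb{Z}$: $\alpha+\gamma=2k\pi+\theta_f$, $x_f-w_xT=r\sin\theta_f+\beta\cos\alpha$, and $y_f-w_yT=r(1-\cos\theta_f)+\beta\sin\alpha$. An $RSR$ path is the analogous path with right arcs, with $T=r(\alpha+\gamma)+\beta$. It reaches the goal iff for some $k\in\mathbb{Z}$: $-\alpha-\gamma=2k\pi+\theta_f$, $x_f-w_xT=-r\sin\theta_f+\beta\cos\alpha$, and $y_f-w_yT=-r(1-\cos\theta_f)-\beta\sin\alpha$. For a positive integer $m$, a path is a $2m\pi$-arc path if $\alpha,\gamma\in[0,2m\pi)$.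 In particular, $4\pi$-arc paths are the case $m=2$. *)

(* Defs.v *)
From Stdlib Require Import Reals ZArith.
Open Scope R_scope.

Inductive path_kind : Set := LSL | RSR.

Definition travel_time (r alpha beta gamma : R) : R :=
  r * (alpha + gamma) + beta.

(* The path of kind [p] with parameters (alpha, beta, gamma), alpha,gamma,beta >= 0,
   reaches the goal pose (xf, yf, thf) in the current (wx, wy). *)
Definition reaches (p : path_kind) (r wx wy xf yf thf alpha beta gamma : R) : Prop :=
  0 <= alpha /\ 0 <= beta /\ 0 <= gamma /\
  let T := travel_time r alpha beta gamma in
  match p with
  | LSL => exists k : Z,
      alpha + gamma = 2 * IZR k * PI + thf /\
      xf - wx * T = r * sin thf + beta * cos alpha /\
      yf - wy * T = r * (1 - cos thf) + beta * sin alpha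
  | RSR => exists k : Z,
      - alpha - gamma = 2 * IZR k * PI + thf /\
      xf - wx * T = - r * sin thf + beta * cos alpha /\
      yf - wy * T = - r * (1 - cos thf) - beta * sin alpha
  end.

Definition arc_path (m : nat) (alpha gamma : R) : Prop :=
  0 <= alpha < 2 * INR m * PI /\ 0 <= gamma < 2 * INR m * PI.

(* Main.v *)
From Stdlib Require Import Reals Lra Psatz.
Open Scope R_scope.

Lemma angle_exists (c d : R) : c * c + d * d = 1 ->
  exists a, 0 <= a < 2 * PI /\ cos a = c /\ sin a = d.
Proof.
  intros H.
  assert (Hc : -1 <= c <= 1) by nra.
  pose proof (acos_bound c) as Hb. pose proof PI_RGT_0.
  assert (Hs : sqrt (1 - c²) = Rabs d).
  { rewrite <- sqrt_Rsqr_abs. f_equal. unfold Rsqr. lra. }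
  destruct (Rle_or_lt 0 d) as [Hd|Hd].
  - exists (acos c). split; [lra|]. split; [apply cos_acos; auto|].
    rewrite sin_acos; auto. rewrite Hs, Rabs_right; lra.
  - assert (acos c <> 0).
    { intro E. pose proof (cos_acos c Hc) as E2. rewrite E, cos_0 in E2. nra. }
    exists (2 * PI - acos c). split; [lra|].
    rewrite cos_minus, sin_minus, cos_2PI, sin_2PI, cos_acos, sin_acos; auto.
    rewrite Hs, Rabs_left; lra.
Qed.

Lemma step (wx wy beta c d L : R) :
  0 <= beta -> 0 < L -> wx*wx + wy*wy < 1 -> c*c + d*d = 1 ->
  exists s beta' c' d', 0 <= s /\ 0 <= beta' /\ c'*c'+d'*d' = 1 /\
    beta' = beta + L - s /\ beta' * c' = beta * c + s * wx /\ beta' * d' = beta * d + s * wy.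
Proof.
  intros Hb HL Hw Hcd.
  set (q := wx*wx+wy*wy). set (p := c*wx+d*wy). set (a := 1 - q).
  set (C := beta + L). set (b := C + beta * p). set (K := C*C - beta*beta).
  set (D := b*b - a*K).
  assert (Eq : q = wx*wx+wy*wy) by reflexivity.
  assert (Ep : p = c*wx+d*wy) by reflexivity.
  assert (Ea : a = 1 - q) by reflexivity.
  assert (EC : C = beta + L) by reflexivity.
  assert (Eb : b = C + beta * p) by reflexivity.
  assert (EK : K = C*C - beta*beta) by reflexivity.
  assert (ED : D = b*b - a*K) by reflexivity.
  clearbody q p a C b K D.
  assert (Ha : 0 < a) by lra.
  assert (Hp : p * p <= q).
  { subst p q. pose proof (Rle_0_sqr (c*wy - d*wx)). unfold Rsqr in *. nra. }
  assert (Hp1 : -1 < p) by nra.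
  assert (HgC : a*C*C - 2*b*C + K <= 0).
  { subst a b K q p. pose proof (Rle_0_sqr (C*wx+beta*c)). pose proof (Rle_0_sqr (C*wy+beta*d)). unfold Rsqr in *. nra. }
  assert (HK : 0 <= K) by (subst K C; nra).
  assert (HD : 0 <= D).
  { subst D. pose proof (Rle_0_sqr (b - a*C)). unfold Rsqr in *. assert (a*(a*C*C - 2*b*C + K) <= a*0) by (apply Rmult_le_compat_l; lra). nra. }
  set (sq := sqrt D).
  assert (Hsq : sq * sq = D) by (apply sqrt_sqrt; auto).
  assert (Hsq0 : 0 <= sq) by apply sqrt_pos.
  assert (Hbpos : 0 < b) by (subst b C; nra).
  set (s := (b - sq) / a).
  assert (Has : a * s = b - sq) by (unfold s; field; lra).
  assert (Hs0 : 0 <= s).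
  { assert (sq <= b) by nra. apply Rmult_le_reg_l with a; lra. }
  assert (HsC : s <= C).
  { apply Rmult_le_reg_l with a; auto. rewrite Has.
    destruct (Rle_or_lt (b - a*C) 0); [nra|].
    assert ((b - a*C)*(b-a*C) <= sq*sq) by nra. nra. }
  assert (Heq : a*s*s - 2*b*s + K = 0).
  { apply Rmult_eq_reg_l with a; [|lra].
    replace (a * (a*s*s - 2*b*s + K)) with ((a*s)*(a*s) - 2*b*(a*s) + a*K) by ring.
    rewrite Has. subst D. nra. }
  assert (Hnorm : (beta*c + s*wx)*(beta*c+s*wx) + (beta*d+s*wy)*(beta*d+s*wy) = (C - s)*(C-s)).
  { subst a b K q p. nra. }
  destruct (Req_dec (C - s) 0) as [E|E].
  - exists s, 0, 1, 0. repeat split; try lra.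
    all: rewrite E in Hnorm; pose proof (Rle_0_sqr (beta*c + s*wx)); pose proof (Rle_0_sqr (beta*d + s*wy)); unfold Rsqr in *; nra.
  - exists s, (C - s), ((beta*c+s*wx)/(C-s)), ((beta*d+s*wy)/(C-s)).
    repeat split; try lra.
    + replace 1 with (((beta*c + s*wx)*(beta*c+s*wx) + (beta*d+s*wy)*(beta*d+s*wy)) / ((C - s)*(C-s))).
      field; auto. rewrite Hnorm. field; auto.
    + field; auto.
    + field; auto.
Qed.

Require Import Defs.
From Stdlib Require Import ZArith.

Lemma w_lt (wx wy : R) : 0 < sqrt (wx ^ 2 + wy ^ 2) < 1 -> wx*wx + wy*wy < 1.
Proof.
  intros [H1 H2].
  assert (E : sqrt (wx ^ 2 + wy ^ 2) * sqrt (wx ^ 2 + wy ^ 2) = wx^2 + wy^2).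
  { apply sqrt_sqrt. nra. }
  set (t := sqrt (wx ^ 2 + wy ^ 2)) in *.
  assert (t * t < 1) by nra.
  replace (wx*wx+wy*wy) with (wx^2+wy^2) by ring. lra.
Qed.

Lemma reduce (p : path_kind) (r wx wy xf yf thf alpha beta gamma : R) :
  0 < r -> wx*wx+wy*wy < 1 -> 4 * PI <= alpha + gamma ->
  reaches p r wx wy xf yf thf alpha beta gamma ->
  exists alpha' beta' gamma',
    alpha' + gamma' = alpha + gamma - 2 * PI /\
    reaches p r wx wy xf yf thf alpha' beta' gamma' /\
    travel_time r alpha' beta' gamma' <= travel_time r alpha beta gamma.
Proof.
  intros Hr Hw HS [Ha [Hb [Hg H]]].
  pose proof PI_RGT_0.
  destruct p; destruct H as [k [Hk [Hx Hy]]]; unfold travel_time in *.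
  - destruct (step wx wy beta (cos alpha) (sin alpha) (2*PI*r)) as
      [s [b' [c' [d' [Hs [Hb' [Hcd [E1 [E2 E3]]]]]]]]]; try nra.
    { pose proof (sin2_cos2 alpha). unfold Rsqr in *. lra. }
    destruct (angle_exists c' d' Hcd) as [a' [Ha' [Hc' Hd']]].
    exists a', b', (alpha + gamma - 2*PI - a'). split; [ring|].
    split; [|nra].
    split; [lra|]. split; [lra|]. split; [lra|].
    exists (k - 1)%Z. rewrite minus_IZR. unfold travel_time.
    rewrite Hc', Hd'. split; [nra|]. split; nra.
  - destruct (step wx wy beta (cos alpha) (- sin alpha) (2*PI*r)) as
      [s [b' [c' [d' [Hs [Hb' [Hcd [E1 [E2 E3]]]]]]]]]; try nra.
    { pose proof (sin2_cos2 alpha). unfold Rsqr in *. lra. }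
    assert (Hcd2 : c'*c' + (-d')*(-d') = 1) by lra.
    destruct (angle_exists c' (-d') Hcd2) as [a' [Ha' [Hc' Hd']]].
    exists a', b', (alpha + gamma - 2*PI - a'). split; [ring|].
    split; [|nra].
    split; [lra|]. split; [lra|]. split; [lra|].
    exists (k + 1)%Z. rewrite plus_IZR. unfold travel_time.
    rewrite Hc', Hd'. split; [nra|]. split; nra.
Qed.

Lemma normalize (p : path_kind) (r wx wy xf yf thf alpha beta gamma : R) :
  alpha + gamma < 4 * PI ->
  reaches p r wx wy xf yf thf alpha beta gamma ->
  exists alpha' beta' gamma',
    arc_path 2 alpha' gamma' /\
    reaches p r wx wy xf yf thf alpha' beta' gamma' /\
    travel_time r alpha' beta' gamma' <= travel_time r alpha beta gamma.
Proof.
  intros HS HR. pose proof PI_RGT_0 as HPI.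
  unfold arc_path. replace (INR 2) with 2 by (simpl; ring).
  destruct HR as [Ha [Hb [Hg H]]].
  destruct (Rlt_or_le alpha (2*PI)) as [Hlt|Hge].
  - exists alpha, beta, gamma. split; [lra|]. split; [|lra].
    split; [lra|]. split; [lra|]. split; [lra|]. exact H.
  - exists (alpha - 2*PI), beta, (gamma + 2*PI). split; [lra|].
    split; [|unfold travel_time; lra].
    assert (Ec : cos (alpha - 2*PI) = cos alpha).
    { rewrite <- (cos_period (alpha - 2*PI) 1). f_equal. simpl. ring. }
    assert (Es : sin (alpha - 2*PI) = sin alpha).
    { rewrite <- (sin_period (alpha - 2*PI) 1). f_equal. simpl. ring. }
    split; [lra|]. split; [lra|]. split; [lra|].
    replace (travel_time r (alpha - 2 * PI) beta (gamma + 2 * PI))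
      with (travel_time r alpha beta gamma) by (unfold travel_time; ring).
    rewrite Ec, Es.
    destruct p; destruct H as [k [Hk Hxy]]; exists k; split; auto; lra.
Qed.

Lemma main_ind (p : path_kind) (r wx wy xf yf thf : R) (m : nat) :
  0 < r -> wx*wx+wy*wy < 1 ->
  forall alpha beta gamma, alpha + gamma < 2 * INR m * PI ->
  reaches p r wx wy xf yf thf alpha beta gamma ->
  exists alpha' beta' gamma',
    arc_path 2 alpha' gamma' /\
    reaches p r wx wy xf yf thf alpha' beta' gamma' /\
    travel_time r alpha' beta' gamma' <= travel_time r alpha beta gamma.
Proof.
  intros Hr Hw. pose proof PI_RGT_0. induction m as [|m IH]; intros alpha beta gamma HS HR.
  - destruct HR as [Ha [Hb [Hg _]]]. simpl in HS. lra.
  - destruct (Rlt_or_le (alpha + gamma) (4*PI)) as [Hlt|Hge].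
    + apply normalize; auto.
    + destruct (reduce p r wx wy xf yf thf alpha beta gamma Hr Hw Hge HR)
        as [a1 [b1 [g1 [E1 [R1 T1]]]]].
      destruct (IH a1 b1 g1) as [a2 [b2 [g2 [A2 [R2 T2]]]]]; auto.
      { rewrite S_INR in HS. lra. }
      exists a2, b2, g2. split; auto. split; auto. lra.
Qed.

Theorem theorem4 :
  forall (r wx wy xf yf thf : R) (n : nat),
    0 < r ->
    0 < sqrt (wx ^ 2 + wy ^ 2) < 1 ->
    0 <= thf < 2 * PI ->
    (2 < n)%nat ->
    forall (p : path_kind) (alpha beta gamma : R),
      arc_path n alpha gamma ->
      reaches p r wx wy xf yf thf alpha beta gamma ->
      exists (p' : path_kind) (alpha' beta' gamma' : R),
        arc_path 2 alpha' gamma' /\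
        reaches p' r wx wy xf yf thf alpha' beta' gamma' /\
        travel_time r alpha' beta' gamma' <= travel_time r alpha beta gamma.
Proof.
  intros r wx wy xf yf thf n Hr Hw Hth Hn p alpha beta gamma Harc HR.
  destruct (main_ind p r wx wy xf yf thf (2 * n) Hr (w_lt wx wy Hw) alpha beta gamma)
    as [a [b [g H]]]; auto.
  { unfold arc_path in Harc. rewrite mult_INR. simpl (INR 2). lra. }
  exists p, a, b, g. exact H.
Qed.
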